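(* Under the hypotheses of Theorem 1 with $R(\delta\theta)=\|\delta\theta\|_1$ on $\mathbb{R}^{p^2}$, there is a constant $\eta_2>0$ such that with high probability $$\|\nabla\mathcal{L}(\delta\theta^*;\mathfrak{X}_1^{n_1},\mathfrak{X}_2^{n_2})\|_\infty\le\frac{\eta_2\sqrt{\log p}}{\sqrt{\min(n_1,n_2)}}.$$
   Context: Theorem 1 refers to: Ising models $P(\mathbf{x}\mid\theta)\propto\exp\{\langle\theta,T(\mathbf{x})\rangle\}$ on $\{-1,1\}^p$ with $T(\mathbf{x})=(x_sx_t)_{s,t=1}^p$; samples $\{\mathbf x^1_i\}_{i=1}^{n_1}$ i.i.d. from $P(\cdot\mid\theta_1^* )$ and $\{\mathbf x^2_i\}_{i=1}^{n_2}$ i.i.d. from $P(\cdot\mid\theta_2^* )$, independent; $\delta\theta^*=\theta_1^*-\theta_2^*$; $Z(\delta\theta)=E_{X\sim P(\cdot\mid\theta_2^* )}[\exp\{\langle T(X),\delta\theta\rangle\}]$, $r(\mathbf{x}\mid\delta\theta)=\exp\{\langle T(\mathbf{x}),\delta\theta\rangle\}/Z(\delta\theta)$; loss $\mathcal{L}(\delta\theta)=-\frac1{n_1}\sum_i\langle T(\mathbf x_i^1),\delta\theta\rangle+\log\frac1{n_2}\sum_i\exp\{\langle T(\mathbf x_i^2),\delta\theta\rangle\}$; smooth density ratio assumption: for all $\mathbf u$ with $\|\mathbf u\|_2\le\|\delta\theta^*\|_2$ and $\epsilon\in\mathbb R$, $E_{X\sim P(\cdot\mid\theta_2^* )}[\exp\{\epsilon(r(X\mid\delta\theta^*+\mathbf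 u)-1)\}]\le e^{\epsilon^2}$; and the eigenvalue bound $\frac12\lambda_{\max}(\nabla^2\mathcal{L}(\delta\theta^*+\mathbf u))\le\eta_0$ for all $\|\mathbf u\|_2\le\|\delta\theta^*\|_2$. *)

(* Defs.v *)
From Stdlib Require Import Reals ClassicalEpsilon.
From mathcomp Require Import all_boot.
Set Implicit Arguments. Unset Strict Implicit. Unset Printing Implicit Defensive.
Local Open Scope R_scope.

Definition rsum (T : finType) (f : T -> R) : R := \big[Rplus/0]_(x : T) f x.
Definition rprod (T : finType) (f : T -> R) : R := \big[Rmult/1]_(x : T) f x.

Definition ind (P : Prop) : R :=
  if excluded_middle_informative P then 1 else 0.

(* spin configurations x in {-1,1}^p; coordinate s is spin (x s) *)
Definition config (p : nat) := {ffun 'I_p -> bool}.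
Definition spin (b : bool) : R := if b then 1 else -1.

Definition param (p : nat) := 'I_p -> 'I_p -> R.

Definition suffT (p : nat) (x : config p) (s t : 'I_p) : R := spin (x s) * spin (x t).

Definition inner (p : nat) (th : param p) (x : config p) : R :=
  rsum (fun s : 'I_p => rsum (fun t : 'I_p => th s t * suffT x s t)).

Definition norm2 (p : nat) (u : param p) : R :=
  sqrt (rsum (fun s : 'I_p => rsum (fun t : 'I_p => u s t ^ 2))).

Definition padd (p : nat) (a b : param p) : param p := fun s t => a s t + b s t.
Definition psub (p : nat) (a b : param p) : param p := fun s t => a s t - b s t.
Definition pscale (p : nat) (h : R) (a : param p) : param p := fun s t => h * a s t.

Definition ebasis (p : nat) (s t : 'I_p) : param p :=
  fun s' t' => if (s' == s) && (t' == t) then 1 else 0.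

Definition ising (p : nat) (th : param p) (x : config p) : R :=
  exp (inner th x) / rsum (fun y : config p => exp (inner th y)).

Definition expect (p : nat) (th : param p) (f : config p -> R) : R :=
  rsum (fun x : config p => ising th x * f x).

Definition Zfun (p : nat) (th2 dth : param p) : R :=
  expect th2 (fun x => exp (inner dth x)).
Definition ratio (p : nat) (th2 dth : param p) (x : config p) : R :=
  exp (inner dth x) / Zfun th2 dth.

Definition sample (p n : nat) := {ffun 'I_n -> config p}.

Definition loss (p n1 n2 : nat) (X1 : sample p n1) (X2 : sample p n2)
  (dth : param p) : R :=
  - (/ INR n1) * rsum (fun i : 'I_n1 => inner dth (X1 i))
  + ln (/ INR n2 * rsum (fun i : 'I_n2 => exp (inner dth (X2 i)))).

Definition prob (p n1 n2 : nat) (th1 th2 : param p)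
  (E : sample p n1 -> sample p n2 -> Prop) : R :=
  rsum (fun X1 : sample p n1 => rsum (fun X2 : sample p n2 =>
    rprod (fun i : 'I_n1 => ising th1 (X1 i)) *
    rprod (fun j : 'I_n2 => ising th2 (X2 j)) * ind (E X1 X2))).

Definition smooth_density_ratio (p : nat) (th1 th2 : param p) : Prop :=
  forall (u : param p) (eps : R),
    norm2 u <= norm2 (psub th1 th2) ->
    expect th2 (fun x => exp (eps * (ratio th2 (padd (psub th1 th2) u) x - 1)))
      <= exp (eps ^ 2).

Definition second_deriv (f : R -> R) (a d2 : R) : Prop :=
  exists f' : R -> R,
    (forall h, derivable_pt_lim f h (f' h)) /\ derivable_pt_lim f' a d2.

(* "lambda_max(M) <= c" for the (symmetric) Hessian M of L at a point w,
   written via the Rayleigh quotient: v^T (Hess L)(w) v <= c ||v||_2^2 for all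
   v, where v^T (Hess L)(w) v is the second derivative of h |-> L(w + h v). *)
Definition hess_lambda_max_le (p : nat) (Lf : param p -> R) (w : param p) (c : R)
  : Prop :=
  forall (v : param p) (d2 : R),
    second_deriv (fun h => Lf (padd w (pscale h v))) 0 d2 -> d2 <= c * norm2 v ^ 2.

(* eigenvalue assumption of Theorem 1 (required for every sample realisation) *)
Definition eigen_bound (p n1 n2 : nat) (th1 th2 : param p) (eta0 : R) : Prop :=
  forall (X1 : sample p n1) (X2 : sample p n2) (u : param p),
    norm2 u <= norm2 (psub th1 th2) ->
    hess_lambda_max_le (loss X1 X2) (padd (psub th1 th2) u) (2 * eta0).

Definition grad_sup_le (p n1 n2 : nat) (X1 : sample p n1) (X2 : sample p n2)
  (dth : param p) (b : R) : Prop :=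
  forall s t : 'I_p, exists g : R,
    derivable_pt_lim (fun h => loss X1 X2 (padd dth (pscale h (ebasis s t)))) 0 g
    /\ Rabs g <= b.

(* Main.v *)
Require Import Defs.
From Stdlib Require Import Reals Lra FunctionalExtensionality ClassicalEpsilon.
From HB Require Import structures.
From mathcomp Require Import all_boot.
Set Implicit Arguments. Unset Strict Implicit. Unset Printing Implicit Defensive.
Local Open Scope R_scope.

Lemma RplusA : associative Rplus. Proof. move=> *; ring. Qed.
Lemma RmultA : associative Rmult. Proof. move=> *; ring. Qed.
HB.instance Definition _ := Monoid.isComLaw.Build R 0 Rplus RplusA Rplus_comm Rplus_0_l.
HB.instance Definition _ := Monoid.isComLaw.Build R 1 Rmult RmultA Rmult_comm Rmult_1_l.
HB.instance Definition _ := Monoid.isMulLaw.Build R 0 Rmult Rmult_0_l Rmult_0_r.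
HB.instance Definition _ := Monoid.isAddLaw.Build R Rmult Rplus Rmult_plus_distr_r Rmult_plus_distr_l.

Section RS.
Variable T : finType.
Implicit Types f g : T -> R.

Lemma rsumD f g : rsum (fun x => f x + g x) = rsum f + rsum g.
Proof. by rewrite /rsum big_split. Qed.

Lemma rsumZ c f : rsum (fun x => c * f x) = c * rsum f.
Proof. by rewrite /rsum -big_distrr. Qed.

Lemma rsum_ext f g : (forall x, f x = g x) -> rsum f = rsum g.
Proof. by move=> H; rewrite /rsum; apply: eq_bigr. Qed.

Lemma rsum_le f g : (forall x, f x <= g x) -> rsum f <= rsum g.
Proof.
move=> H; rewrite /rsum; apply: (big_ind2 (fun a b => a <= b)) => //.
- lra.
- by move=> *; apply: Rplus_le_compat.
Qed.

Lemma rsum_ge0 f : (forall x, 0 <= f x) -> 0 <= rsum f.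
Proof. move=> H; have := @rsum_le (fun _ => 0) f H; by rewrite /rsum big1. Qed.

Lemma rsum_const c : rsum (fun _ : T => c) = INR #|T| * c.
Proof.
rewrite /rsum big_const; elim: #|T| => [|n IH] /=; first lra.
rewrite IH -/(INR n.+1) S_INR; lra.
Qed.
End RS.

Section RS2.
Variable T : finType.
Implicit Types f g : T -> R.

Lemma rsum_Rabs f : Rabs (rsum f) <= rsum (fun x => Rabs (f x)).
Proof.
rewrite /rsum; apply: (big_ind2 (fun a b => Rabs a <= b)).
- rewrite Rabs_R0; lra.
- move=> a b c d H1 H2; apply: Rle_trans (Rabs_triang _ _) _; lra.
- move=> *; lra.
Qed.

Lemma rsum_single f x0 : (forall x, 0 <= f x) -> f x0 <= rsum f.
Proof.
move=> H; rewrite /rsum (bigD1 x0) //=.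
have : 0 <= \big[Rplus/0]_(i | i != x0) f i.
  by apply: (big_ind (fun a => 0 <= a)) => //; [lra| move=> *; lra].
lra.
Qed.

Lemma rprodM f g : rprod (fun x => f x * g x) = rprod f * rprod g.
Proof. by rewrite /rprod big_split. Qed.

Lemma rprod_ge0 f : (forall x, 0 <= f x) -> 0 <= rprod f.
Proof.
move=> H; rewrite /rprod; apply: (big_ind (fun a => 0 <= a)) => //; first lra.
by move=> *; apply: Rmult_le_pos.
Qed.

Lemma rprod_le f g : (forall x, 0 <= f x) -> (forall x, f x <= g x) -> rprod f <= rprod g.
Proof.
move=> H0 H; rewrite /rprod.
suff: 0 <= \big[Rmult/1]_x f x /\ \big[Rmult/1]_x f x <= \big[Rmult/1]_x g x by case.
apply: (big_ind2 (fun a b => 0 <= a /\ a <= b)).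
- lra.
- move=> a b c d [? ?] [? ?]; split; first by apply: Rmult_le_pos.
  by apply: Rmult_le_compat.
- by move=> i _; split.
Qed.

Lemma exp_rsum f : exp (rsum f) = rprod (fun x => exp (f x)).
Proof.
rewrite /rsum /rprod; apply: (big_morph exp) => [x y|]; first by rewrite exp_plus.
by rewrite exp_0.
Qed.

Lemma rsumN f : rsum (fun x => - f x) = - rsum f.
Proof. rewrite (@rsum_ext _ _ (fun x => (-1) * f x)); last by move=> x; ring.
by rewrite rsumZ; ring. Qed.

Lemma rsumB f g : rsum (fun x => f x - g x) = rsum f - rsum g.
Proof. rewrite /Rminus rsumD rsumN //. Qed.
End RS2.

Lemma rprod_const n c : rprod (fun _ : 'I_n => c) = c ^ n.
Proof.
rewrite /rprod big_const card_ord; elim: n => [|n IH] //=; by rewrite IH.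
Qed.

Lemma prod_sum (T : finType) n (F : 'I_n -> T -> R) :
  rsum (fun X : {ffun 'I_n -> T} => rprod (fun i => F i (X i))) =
  rprod (fun i => rsum (F i)).
Proof. by rewrite /rsum /rprod bigA_distr_bigA. Qed.

Lemma exp_pow a n : exp a ^ n = exp (INR n * a).
Proof.
elim: n => [|n IH] /=; first by rewrite Rmult_0_l exp_0.
rewrite IH -exp_plus -/(INR n.+1) S_INR; f_equal; ring.
Qed.

Lemma ind_ge0 P : 0 <= Defs.ind P.
Proof. rewrite /Defs.ind; case: (excluded_middle_informative P) => /= _; lra. Qed.
Lemma ind_le1 P : Defs.ind P <= 1.
Proof. rewrite /Defs.ind; case: (excluded_middle_informative P) => /= _; lra. Qed.
Lemma ind_T (P : Prop) : P -> Defs.ind P = 1.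
Proof. rewrite /Defs.ind; case: (excluded_middle_informative P) => /= H; tauto. Qed.
Lemma ind_F (P : Prop) : ~ P -> Defs.ind P = 0.
Proof. rewrite /Defs.ind; case: (excluded_middle_informative P) => /= H; tauto. Qed.

Lemma exp_le x y : x <= y -> exp x <= exp y.
Proof. case/Rle_lt_or_eq_dec => H; [by apply/Rlt_le/exp_increasing | by rewrite H; lra]. Qed.

Lemma ind_le_exp (S u l : R) : 0 <= l -> Defs.ind (S > u) <= exp (l * (S - u)).
Proof.
move=> hl; rewrite /Defs.ind; case: (excluded_middle_informative _) => /= H.
- rewrite -exp_0; apply: exp_le; apply: Rmult_le_pos; lra.
- by apply/Rlt_le/exp_pos.
Qed.

Lemma exp_taylor y : exp y <= 1 + y + y ^ 2 * exp (Rabs y).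
Proof.
have h1 : exp y <= 1 + y * exp y.
  have := exp_ineq1_le (- y); have := exp_pos y.
  rewrite exp_Ropp => hp h; have := Rmult_le_compat_l (exp y) _ _ (Rlt_le _ _ hp) h.
  rewrite Rinv_r; last by apply: Rgt_not_eq. move=> h'; nra.
have h2 := exp_ineq1_le y.
case: (Rle_or_lt 0 y) => hy.
- rewrite Rabs_right; last lra. nra.
- rewrite Rabs_left //. have : 1 <= exp (- y) by rewrite -exp_0; apply: exp_le; lra.
  have := exp_pos y. nra.
Qed.

Lemma mgf_bound (T : finType) (w Y B : T -> R) (M l : R) :
  (forall x, 0 <= w x) -> rsum w = 1 -> rsum (fun x => w x * Y x) = 0 ->
  (forall x, Y x ^ 2 * exp (Rabs (l * Y x)) <= B x) ->
  rsum (fun x => w x * B x) <= M ->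
  rsum (fun x => w x * exp (l * Y x)) <= exp (l ^ 2 * M).
Proof.
move=> w0 w1 wY hB hM.
apply: Rle_trans (_ : rsum (fun x => w x + l * (w x * Y x) + l ^ 2 * (w x * B x)) <= _).
  apply: rsum_le => x; have := exp_taylor (l * Y x); have := hB x; have := w0 x.
  have : 0 <= l ^ 2 by nra.
  move=> hl2 hw hb ht.
  have : w x * exp (l * Y x) <= w x * (1 + l * Y x + (l * Y x) ^ 2 * exp (Rabs (l * Y x))).
    by apply: Rmult_le_compat_l.
  have : (l * Y x) ^ 2 * exp (Rabs (l * Y x)) <= l ^ 2 * B x.
    rewrite (_ : (l * Y x) ^ 2 = l ^ 2 * Y x ^ 2); last ring.
    rewrite Rmult_assoc; by apply: Rmult_le_compat_l.
  nra.
rewrite !rsumD !rsumZ w1 wY.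
apply: Rle_trans (exp_ineq1_le _).
have : 0 <= l ^ 2 by nra.
nra.
Qed.

Lemma chernoff1 (T : finType) n (w Y : T -> R) (K t : R) :
  (forall x, 0 <= w x) -> 0 < K ->
  (forall l, Rabs l <= 1 -> rsum (fun x => w x * exp (l * Y x)) <= exp (K * l ^ 2)) ->
  0 < t <= 2 * K ->
  rsum (fun X : {ffun 'I_n -> T} => rprod (fun i => w (X i)) *
          Defs.ind (rsum (fun i => Y (X i)) > INR n * t))
  <= exp (- (INR n * t ^ 2 / (4 * K))).
Proof.
move=> w0 K0 hm ht.
set l := t / (2 * K).
have hl0 : 0 < l by rewrite /l; apply: Rdiv_lt_0_compat; lra.
have hl1 : l <= 1.
  rewrite /l; apply: (Rmult_le_reg_r (2 * K)); first lra.
  rewrite /Rdiv Rmult_assoc Rinv_l; lra.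
apply: Rle_trans (_ : rsum (fun X : {ffun 'I_n -> T} => exp (- (l * (INR n * t))) *
   rprod (fun i => w (X i) * exp (l * Y (X i)))) <= _).
  apply: rsum_le => X.
  rewrite rprodM -Rmult_assoc (Rmult_comm (exp _)) Rmult_assoc.
  apply: Rmult_le_compat_l; first by apply: rprod_ge0.
  rewrite -exp_rsum -exp_plus.
  apply: Rle_trans (ind_le_exp _ _ (Rlt_le _ _ hl0)) _.
  apply: exp_le.
  rewrite (rsumZ l (fun i => Y (X i))); apply: Req_le; set S := rsum _; rewrite Rmult_minus_distr_l; lra.
rewrite rsumZ (prod_sum (fun i x => w x * exp (l * Y x))) rprod_const.
apply: Rle_trans (_ : exp (- (l * (INR n * t))) * exp (K * l ^ 2) ^ n <= _).
  apply: Rmult_le_compat_l; first by apply/Rlt_le/exp_pos.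
  apply: pow_incr; split; last by apply: hm; rewrite Rabs_right; lra.
  apply: rsum_ge0 => x; apply: Rmult_le_pos => //; by apply/Rlt_le/exp_pos.
rewrite exp_pow -exp_plus; apply: exp_le.
rewrite /l; apply: Req_le; field; lra.
Qed.

Lemma chernoff2 (T : finType) n (w Y : T -> R) (K t : R) :
  (forall x, 0 <= w x) -> 0 < K ->
  (forall l, Rabs l <= 1 -> rsum (fun x => w x * exp (l * Y x)) <= exp (K * l ^ 2)) ->
  0 < t <= 2 * K ->
  rsum (fun X : {ffun 'I_n -> T} => rprod (fun i => w (X i)) *
          Defs.ind (Rabs (rsum (fun i => Y (X i))) > INR n * t))
  <= 2 * exp (- (INR n * t ^ 2 / (4 * K))).
Proof.
move=> w0 K0 hm ht.
have h1 := chernoff1 n w0 K0 hm ht.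
have hm' : forall l, Rabs l <= 1 -> rsum (fun x => w x * exp (l * (- Y x))) <= exp (K * l ^ 2).
  move=> l hl; rewrite (@rsum_ext _ _ (fun x => w x * exp ((- l) * Y x))); last first.
    by move=> x; rewrite -Ropp_mult_distr_l Ropp_mult_distr_r.
  rewrite (_ : l ^ 2 = (- l) ^ 2); last ring.
  by apply: hm; rewrite Rabs_Ropp.
have h2 := chernoff1 n w0 K0 hm' ht.
apply: Rle_trans (_ : rsum (fun X : {ffun 'I_n -> T} => rprod (fun i => w (X i)) *
          Defs.ind (rsum (fun i => Y (X i)) > INR n * t)
       + rprod (fun i => w (X i)) * Defs.ind (rsum (fun i => - Y (X i)) > INR n * t)) <= _); last first.
  rewrite rsumD; apply: Rle_trans (Rplus_le_compat _ _ _ _ h1 h2) _; lra.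
apply: rsum_le => X; rewrite -Rmult_plus_distr_l.
apply: Rmult_le_compat_l; first by apply: rprod_ge0.
rewrite (rsumN (fun i => Y (X i))).
set S := rsum _.
have := ind_ge0 (S > INR n * t); have := ind_ge0 (- S > INR n * t).
case: (Rle_or_lt (Rabs S) (INR n * t)) => hS.
  rewrite (ind_F (P := Rabs S > _)); lra.
rewrite (ind_T (P := Rabs S > _)); last lra.
case: (Rle_or_lt 0 S) => hs.
  rewrite Rabs_right in hS; last lra. rewrite (ind_T (P := S > _)); lra.
rewrite Rabs_left in hS; last lra. rewrite (ind_T (P := - S > _)); lra.
Qed.

Lemma dpl_ext (f g : R -> R) x l :
  (forall h, f h = g h) -> derivable_pt_lim g x l -> derivable_pt_lim f x l.
Proof. by move=> H; rewrite (functional_extensionality f g H). Qed.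

Lemma dpl_rsum (T : finType) (F : T -> R -> R) (d : T -> R) x :
  (forall i, derivable_pt_lim (F i) x (d i)) ->
  derivable_pt_lim (fun h => rsum (fun i => F i h)) x (rsum d).
Proof.
move=> H; rewrite /rsum; elim: (index_enum T) => [|a r IH].
  apply: (dpl_ext (g := fct_cte 0)); first by move=> h; rewrite big_nil.
  rewrite big_nil; exact: derivable_pt_lim_const.
apply: (dpl_ext (g := plus_fct (F a) (fun h => \big[Rplus/0]_(i <- r) F i h))).
  by move=> h; rewrite big_cons.
rewrite big_cons; exact: derivable_pt_lim_plus.
Qed.

Lemma dpl_lin c T0 x : derivable_pt_lim (fun h => c + h * T0) x T0.
Proof.
apply: (dpl_ext (g := plus_fct (fct_cte c) (mult_real_fct T0 id))).
  by move=> h; rewrite /plus_fct /fct_cte /mult_real_fct /id; ring.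
have H := derivable_pt_lim_plus _ _ x _ _ (derivable_pt_lim_const c x)
  (derivable_pt_lim_scal id T0 x _ (derivable_pt_lim_id x)).
by rewrite Rplus_0_l Rmult_1_r in H.
Qed.

Lemma dpl_explin c T0 x : derivable_pt_lim (fun h => exp (c + h * T0)) x (T0 * exp (c + x * T0)).
Proof.
apply: (dpl_ext (g := comp exp (fun h => c + h * T0))) => //.
rewrite Rmult_comm; apply: derivable_pt_lim_comp; first exact: dpl_lin.
exact: derivable_pt_lim_exp.
Qed.

Lemma inner_padd p (a b : param p) x : inner (padd a b) x = inner a x + inner b x.
Proof.
rewrite /inner -rsumD; apply: rsum_ext => s; rewrite -rsumD; apply: rsum_ext => t.
rewrite /padd; ring.
Qed.

Lemma inner_psub p (a b : param p) x : inner (psub a b) x = inner a x - inner b x.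
Proof.
rewrite /inner -rsumB; apply: rsum_ext => s; rewrite -rsumB; apply: rsum_ext => t.
rewrite /psub; ring.
Qed.

Lemma inner_pscale p h (a : param p) x : inner (pscale h a) x = h * inner a x.
Proof.
rewrite /inner -rsumZ; apply: rsum_ext => s; rewrite -rsumZ; apply: rsum_ext => t.
rewrite /pscale; ring.
Qed.

Lemma inner_ebasis p (s t : 'I_p) x : inner (ebasis s t) x = suffT x s t.
Proof.
rewrite /inner /rsum /ebasis (bigD1 s) //= (bigD1 t) //= eqxx /=.
rewrite big1; last by move=> t' /negbTE ->; ring.
rewrite big1; last first.
  move=> s' /negbTE ->; rewrite big1 //= => t' _; ring.
by rewrite eqxx; ring.
Qed.

Lemma suffT_abs p (x : config p) s t : Rabs (suffT x s t) <= 1.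
Proof. rewrite /suffT /spin; apply: Rabs_le; case: (x s); case: (x t); lra. Qed.

Definition Snorm p (th : param p) := rsum (fun y : config p => exp (inner th y)).

Lemma Snorm_pos p (th : param p) : 0 < Snorm th.
Proof.
pose y0 : config p := [ffun=> true].
apply: Rlt_le_trans (exp_pos (inner th y0)) _.
rewrite /Snorm; apply: (@rsum_single _ (fun y : config p => exp (inner th y)) y0) => y.
exact/Rlt_le/exp_pos.
Qed.

Lemma ising_ge0 p (th : param p) x : 0 <= ising th x.
Proof.
rewrite /ising; apply: Rlt_le; apply: Rdiv_lt_0_compat; first exact: exp_pos.
exact: Snorm_pos.
Qed.

Lemma ising_sum1 p (th : param p) : rsum (ising th) = 1.
Proof.
rewrite /ising (@rsum_ext _ _ (fun x => / Snorm th * exp (inner th x))); last first.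
  by move=> x; rewrite /Rdiv Rmult_comm.
rewrite rsumZ; apply: Rinv_l; apply: Rgt_not_eq; exact: Snorm_pos.
Qed.

Lemma Zfun_eq p (th1 th2 : param p) : Zfun th2 (psub th1 th2) = Snorm th1 / Snorm th2.
Proof.
rewrite /Zfun /expect /ising /Rdiv.
rewrite (@rsum_ext _ _ (fun x => / Snorm th2 * exp (inner th1 x))); last first.
  move=> x; rewrite inner_psub (Rmult_comm (exp _)) Rmult_assoc -exp_plus.
  rewrite /Snorm; do 2 f_equal; ring.
by rewrite rsumZ Rmult_comm.
Qed.

Lemma Zfun_pos p (th1 th2 : param p) : 0 < Zfun th2 (psub th1 th2).
Proof. rewrite Zfun_eq; apply: Rdiv_lt_0_compat; exact: Snorm_pos. Qed.

Lemma ising_ratio p (th1 th2 : param p) x :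
  ising th2 x * ratio th2 (psub th1 th2) x = ising th1 x.
Proof.
rewrite /ratio Zfun_eq /ising inner_psub.
have h1 := Snorm_pos th1; have h2 := Snorm_pos th2.
rewrite /Snorm in h1 h2 *.
rewrite (_ : exp (inner th1 x) = exp (inner th2 x) * exp (inner th1 x - inner th2 x)); last first.
  by rewrite -exp_plus; f_equal; ring.
field; lra.
Qed.

Lemma ratio_pos p (th1 th2 : param p) x : 0 < ratio th2 (psub th1 th2) x.
Proof. rewrite /ratio; apply: Rdiv_lt_0_compat; [exact: exp_pos | exact: Zfun_pos]. Qed.

Definition Kc := 4 * exp 20.

Lemma Kc_ge1 : 1 <= Kc.
Proof. rewrite /Kc; have : 1 <= exp 20 by rewrite -exp_0; apply: exp_le; lra. lra. Qed.

Lemma mean_abs_le1 (T : finType) (w f : T -> R) :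
  (forall x, 0 <= w x) -> rsum w = 1 -> (forall x, Rabs (f x) <= 1) ->
  Rabs (rsum (fun x => w x * f x)) <= 1.
Proof.
move=> w0 w1 hf; apply: Rle_trans (rsum_Rabs _) _; rewrite -w1; apply: rsum_le => x.
rewrite Rabs_mult Rabs_right; last by apply: Rle_ge.
have := hf x; have := w0 x; nra.
Qed.

Definition mu p (th1 : param p) (s t : 'I_p) := expect th1 (fun x => suffT x s t).

Lemma mu_abs p (th1 : param p) s t : Rabs (mu th1 s t) <= 1.
Proof.
apply: mean_abs_le1; [exact: ising_ge0 | exact: ising_sum1 | move=> x; exact: suffT_abs].
Qed.

Lemma center_zero p (th1 : param p) s t :
  rsum (fun x => ising th1 x * (suffT x s t - mu th1 s t)) = 0.
Proof.
rewrite (@rsum_ext _ _ (fun x => ising th1 x * suffT x s t - mu th1 s t * ising th1 x)); last first.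
  move=> x; ring.
rewrite rsumB rsumZ ising_sum1 /mu /expect; rewrite Rmult_1_r; by apply: Rminus_diag_eq.
Qed.

Lemma mgf_a p (th1 : param p) s t l : Rabs l <= 1 ->
  rsum (fun x => ising th1 x * exp (l * (suffT x s t - mu th1 s t))) <= exp (Kc * l ^ 2).
Proof.
move=> hl.
apply: Rle_trans (_ : exp (l ^ 2 * (4 * exp 2)) <= _).
  apply: (mgf_bound (B := fun _ => 4 * exp 2)).
  - exact: ising_ge0.
  - exact: ising_sum1.
  - exact: center_zero.
  - move=> x; have hY : Rabs (suffT x s t - mu th1 s t) <= 2.
      apply: Rle_trans (Rabs_triang _ _) _; rewrite Rabs_Ropp.
      have := suffT_abs x s t; have := mu_abs th1 s t; lra.
    set Y := suffT x s t - mu th1 s t in hY *.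
    apply: Rmult_le_compat.
    + nra.
    + exact/Rlt_le/exp_pos.
    + rewrite -(pow2_abs Y); have := Rabs_pos Y; nra.
    + apply: exp_le; rewrite Rabs_mult; have := Rabs_pos Y; have := Rabs_pos l; nra.
  - rewrite (@rsum_ext _ _ (fun x => (4 * exp 2) * ising th1 x)); last by move=> x; ring.
    rewrite rsumZ ising_sum1; lra.
apply: exp_le; rewrite /Kc.
have : exp 2 <= exp 20 by apply: exp_le; lra.
have : 0 <= l ^ 2 by nra.
nra.
Qed.

Lemma smooth0 p (th1 th2 : param p) : smooth_density_ratio th1 th2 ->
  forall eps, rsum (fun x => ising th2 x * exp (eps * (ratio th2 (psub th1 th2) x - 1)))
              <= exp (eps ^ 2).
Proof.
move=> H eps.
have e : padd (psub th1 th2) (fun _ _ => 0) = psub th1 th2.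
  apply: functional_extensionality => s; apply: functional_extensionality => t.
  by rewrite /padd Rplus_0_r.
have := H (fun _ _ => 0) eps; rewrite e /expect; apply.
rewrite /norm2.
rewrite (@rsum_ext _ _ (fun _ => 0)); last first.
  move=> s; rewrite /rsum big1 // => t _; ring.
rewrite /rsum big1 // sqrt_0; exact: sqrt_pos.
Qed.

Lemma mgf_b p (th1 th2 : param p) l : smooth_density_ratio th1 th2 ->
  rsum (fun x => ising th2 x * exp (l * (ratio th2 (psub th1 th2) x - 1))) <= exp (Kc * l ^ 2).
Proof.
move=> H; apply: Rle_trans (smooth0 H l) _; apply: exp_le.
have := Kc_ge1; have : 0 <= l ^ 2 by nra. nra.
Qed.

Lemma mgf_c p (th1 th2 : param p) s t l : smooth_density_ratio th1 th2 -> Rabs l <= 1 ->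
  rsum (fun x => ising th2 x * exp (l * (ratio th2 (psub th1 th2) x *
                                        (suffT x s t - mu th1 s t)))) <= exp (Kc * l ^ 2).
Proof.
move=> H hl.
set a := ratio th2 (psub th1 th2).
rewrite Rmult_comm.
apply: (mgf_bound (B := fun x => 4 * exp 4 * exp (4 * (a x - 1)))).
- exact: ising_ge0.
- exact: ising_sum1.
- rewrite -(center_zero th1 s t); apply: rsum_ext => x.
  by rewrite -Rmult_assoc /a ising_ratio.
- move=> x; have hY : Rabs (suffT x s t - mu th1 s t) <= 2.
    apply: Rle_trans (Rabs_triang _ _) _; rewrite Rabs_Ropp.
    have := suffT_abs x s t; have := mu_abs th1 s t; lra.
  have ha : 0 < a x by exact: ratio_pos.
  set Y := suffT x s t - mu th1 s t in hY *.
  have hAY : Rabs (a x * Y) <= 2 * a x.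
    rewrite Rabs_mult Rabs_right; last lra. nra.
  have hea : a x <= exp (a x) by have := exp_ineq1_le (a x); lra.
  rewrite (_ : 4 * exp 4 * exp (4 * (a x - 1)) = 4 * (exp (a x) * exp (a x)) * exp (2 * a x)); last first.
    rewrite !Rmult_assoc -!exp_plus; congr (_ * (_ * exp _)); ring.
  apply: Rmult_le_compat.
  + nra.
  + exact/Rlt_le/exp_pos.
  + rewrite -(pow2_abs (a x * Y)); have := Rabs_pos (a x * Y).
    have := exp_pos (a x). nra.
  + apply: exp_le; rewrite Rabs_mult; have := Rabs_pos (a x * Y); have := Rabs_pos l; nra.
- rewrite (@rsum_ext _ _ (fun x => (4 * exp 4) * (ising th2 x * exp (4 * (a x - 1))))); last first.
    by move=> x; ring.
  rewrite rsumZ; apply: Rle_trans (_ : 4 * exp 4 * exp (4 ^ 2) <= _).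
    apply: Rmult_le_compat_l; first by have := exp_pos 4; lra.
    exact: smooth0.
  rewrite /Kc Rmult_assoc -exp_plus; apply: Req_le; congr (_ * exp _); ring.
Qed.

Lemma inner_dir p (d : param p) h s t x :
  inner (padd d (pscale h (ebasis s t))) x = inner d x + h * suffT x s t.
Proof. by rewrite inner_padd inner_pscale inner_ebasis. Qed.

Lemma grad_form p n1 n2 (X1 : sample p n1) (X2 : sample p n2) (d : param p) s t :
  (0 < n2)%nat ->
  derivable_pt_lim (fun h => loss X1 X2 (padd d (pscale h (ebasis s t)))) 0
    (- / INR n1 * rsum (fun i => suffT (X1 i) s t) +
     rsum (fun i => suffT (X2 i) s t * exp (inner d (X2 i))) /
     rsum (fun i => exp (inner d (X2 i)))).
Proof.
move=> hn2.
have n2p : 0 < INR n2 by apply: lt_0_INR; apply/ltP.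
set F := fun h => / INR n2 * rsum (fun i => exp (inner d (X2 i) + h * suffT (X2 i) s t)).
have Fpos : 0 < F 0.
  rewrite /F; apply: Rmult_lt_0_compat; first exact: Rinv_0_lt_compat.
  apply: Rlt_le_trans (exp_pos (inner d (X2 (Ordinal hn2)) + 0 * suffT (X2 (Ordinal hn2)) s t)) _.
  apply: (@rsum_single _ (fun i => exp (inner d (X2 i) + 0 * suffT (X2 i) s t)) (Ordinal hn2)).
  move=> i; exact/Rlt_le/exp_pos.
have dF : derivable_pt_lim F 0
    (/ INR n2 * rsum (fun i => suffT (X2 i) s t * exp (inner d (X2 i) + 0 * suffT (X2 i) s t))).
  apply: (dpl_ext (g := mult_real_fct (/ INR n2)
     (fun h => rsum (fun i => exp (inner d (X2 i) + h * suffT (X2 i) s t))))) => //.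
  apply: derivable_pt_lim_scal.
  apply: (dpl_rsum (F := fun i h => exp (inner d (X2 i) + h * suffT (X2 i) s t))) => i.
  exact: dpl_explin.
have dL := derivable_pt_lim_comp _ _ _ _ _ dF (derivable_pt_lim_ln _ Fpos).
have dA : derivable_pt_lim (fun h => - / INR n1 * rsum (fun i => inner d (X1 i) + h * suffT (X1 i) s t)) 0
    (- / INR n1 * rsum (fun i => suffT (X1 i) s t)).
  apply: (dpl_ext (g := mult_real_fct (- / INR n1)
     (fun h => rsum (fun i => inner d (X1 i) + h * suffT (X1 i) s t)))) => //.
  apply: derivable_pt_lim_scal.
  apply: (dpl_rsum (F := fun i h => inner d (X1 i) + h * suffT (X1 i) s t)) => i.
  exact: dpl_lin.
have H := derivable_pt_lim_plus _ _ _ _ _ dA dL.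
have e0 : rsum (fun i => suffT (X2 i) s t * exp (inner d (X2 i) + 0 * suffT (X2 i) s t))
    = rsum (fun i => suffT (X2 i) s t * exp (inner d (X2 i))).
  by apply: rsum_ext => i; rewrite Rmult_0_l Rplus_0_r.
have hF0 : F 0 = / INR n2 * rsum (fun i => exp (inner d (X2 i))).
  by rewrite /F; congr (_ * _); apply: rsum_ext => i; rewrite Rmult_0_l Rplus_0_r.
have Apos : 0 < rsum (fun i => exp (inner d (X2 i))).
  move: Fpos; rewrite hF0 => Fp.
  have := Rinv_0_lt_compat _ n2p; nra.
move: H; rewrite e0 hF0 => H.
apply: (dpl_ext (g := plus_fct
   (fun h => - / INR n1 * rsum (fun i => inner d (X1 i) + h * suffT (X1 i) s t))
   (comp ln F))).
  move=> h; rewrite /loss /plus_fct /comp /F; congr (_ * _ + ln (_ * _)).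
    by apply: rsum_ext => i; rewrite inner_dir.
  by apply: rsum_ext => i; rewrite inner_dir.
move: H; set A := rsum (fun i => exp (inner d (X2 i))) in Apos *.
set B := rsum (fun i => suffT (X2 i) s t * exp (inner d (X2 i))).
set C := - / INR n1 * _.
have -> : / (/ INR n2 * A) * (/ INR n2 * B) = B / A by field; lra.
done.
Qed.


Lemma rsum_card n c : rsum (fun _ : 'I_n => c) = INR n * c.
Proof. by rewrite rsum_const card_ord. Qed.

Lemma grad_value p n1 n2 (X1 : sample p n1) (X2 : sample p n2) (th1 th2 : param p) s t :
  (0 < n1)%nat -> (0 < n2)%nat ->
  let a := ratio th2 (psub th1 th2) in
  let u := rsum (fun i => suffT (X1 i) s t - mu th1 s t) in
  let v := rsum (fun i => a (X2 i) * (suffT (X2 i) s t - mu th1 s t)) in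
  let SA := rsum (fun i => a (X2 i)) in
  0 < SA /\
  derivable_pt_lim (fun h => loss X1 X2 (padd (psub th1 th2) (pscale h (ebasis s t)))) 0
    (- (u / INR n1) + v / SA).
Proof.
move=> hn1 hn2 a u v SA.
have n1p : 0 < INR n1 by apply: lt_0_INR; apply/ltP.
have Zp := Zfun_pos th1 th2.
set Z := Zfun th2 (psub th1 th2) in Zp.
have hSA : SA = / Z * rsum (fun i => exp (inner (psub th1 th2) (X2 i))).
  rewrite -rsumZ /SA; apply: rsum_ext => i; rewrite /a /ratio -/Z /Rdiv; ring.
have hA : 0 < rsum (fun i => exp (inner (psub th1 th2) (X2 i))).
  apply: Rlt_le_trans (exp_pos (inner (psub th1 th2) (X2 (Ordinal hn2)))) _.
  apply: (@rsum_single _ (fun i => exp (inner (psub th1 th2) (X2 i))) (Ordinal hn2)).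
  move=> i; exact/Rlt_le/exp_pos.
have SAp : 0 < SA by rewrite hSA; apply: Rmult_lt_0_compat => //; exact: Rinv_0_lt_compat.
split => //.
have H := grad_form X1 X2 (psub th1 th2) s t hn2.
suff -> : - (u / INR n1) + v / SA =
   - / INR n1 * rsum (fun i => suffT (X1 i) s t) +
     rsum (fun i => suffT (X2 i) s t * exp (inner (psub th1 th2) (X2 i))) /
     rsum (fun i => exp (inner (psub th1 th2) (X2 i))) by [].
have hu : u = rsum (fun i => suffT (X1 i) s t) - INR n1 * mu th1 s t.
  by rewrite /u rsumB rsum_card.
have hv : v = / Z * rsum (fun i => suffT (X2 i) s t * exp (inner (psub th1 th2) (X2 i)))
              - mu th1 s t * SA.
  rewrite /v -rsumZ /SA -rsumZ -rsumB; apply: rsum_ext => i.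
  rewrite /a /ratio -/Z /Rdiv; ring.
rewrite hu hv hSA.
set A := rsum (fun i => exp (inner (psub th1 th2) (X2 i))) in hA *.
set B := rsum (fun i => suffT (X2 i) s t * exp _).
set S1 := rsum (fun i => suffT (X1 i) s t).
field; lra.
Qed.

Lemma abs_div_le u N c : 0 < N -> Rabs u <= N * c -> Rabs (u / N) <= c.
Proof.
move=> hN hu; rewrite Rabs_mult Rabs_inv (Rabs_right N); last lra.
apply: (Rmult_le_reg_r N) => //; rewrite Rmult_assoc Rinv_l; lra.
Qed.

Lemma Tmu_abs p (th1 : param p) (x : config p) s t : Rabs (suffT x s t - mu th1 s t) <= 2.
Proof.
apply: Rle_trans (Rabs_triang _ _) _; rewrite Rabs_Ropp.
have := suffT_abs x s t; have := mu_abs th1 s t; lra.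
Qed.

Lemma grad_good p n1 n2 (X1 : sample p n1) (X2 : sample p n2) (th1 th2 : param p) s t b :
  (0 < n1)%nat -> (0 < n2)%nat ->
  ~ (Rabs (rsum (fun i => suffT (X1 i) s t - mu th1 s t)) > INR n1 * (b / 2)) ->
  ~ (Rabs (rsum (fun i => ratio th2 (psub th1 th2) (X2 i) * (suffT (X2 i) s t - mu th1 s t)))
       > INR n2 * (b / 4)) ->
  ~ (rsum (fun i => 1 - ratio th2 (psub th1 th2) (X2 i)) > INR n2 * / 2) ->
  exists g, derivable_pt_lim (fun h => loss X1 X2 (padd (psub th1 th2) (pscale h (ebasis s t)))) 0 g
    /\ Rabs g <= b.
Proof.
move=> hn1 hn2 h1 h2 h3.
have [SAp H] := grad_value X1 X2 th1 th2 s t hn1 hn2.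
eexists; split; first exact: H.
have n1p : 0 < INR n1 by apply: lt_0_INR; apply/ltP.
have n2p : 0 < INR n2 by apply: lt_0_INR; apply/ltP.
move: SAp h1 h2 h3.
set a := ratio th2 (psub th1 th2).
set u := rsum (fun i => suffT (X1 i) s t - mu th1 s t).
set v := rsum (fun i => a (X2 i) * (suffT (X2 i) s t - mu th1 s t)).
set SA := rsum (fun i => a (X2 i)).
rewrite rsumB rsum_card -/SA => SAp h1 h2 h3.
have hu : Rabs u <= INR n1 * (b / 2) by lra.
have hb : 0 <= b by have := Rabs_pos u; nra.
have hv : Rabs v <= SA * (b / 2) by nra.
apply: Rle_trans (Rabs_triang _ _) _; rewrite Rabs_Ropp.
have := abs_div_le n1p hu; have := abs_div_le SAp hv; lra.
Qed.

Lemma grad_always p n1 n2 (X1 : sample p n1) (X2 : sample p n2) (th1 th2 : param p) s t b :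
  (0 < n1)%nat -> (0 < n2)%nat -> 4 <= b ->
  exists g, derivable_pt_lim (fun h => loss X1 X2 (padd (psub th1 th2) (pscale h (ebasis s t)))) 0 g
    /\ Rabs g <= b.
Proof.
move=> hn1 hn2 hb.
have [SAp H] := grad_value X1 X2 th1 th2 s t hn1 hn2.
eexists; split; first exact: H.
have n1p : 0 < INR n1 by apply: lt_0_INR; apply/ltP.
move: SAp.
set a := ratio th2 (psub th1 th2).
set u := rsum (fun i => suffT (X1 i) s t - mu th1 s t).
set v := rsum (fun i => a (X2 i) * (suffT (X2 i) s t - mu th1 s t)).
set SA := rsum (fun i => a (X2 i)) => SAp.
have hu : Rabs u <= INR n1 * 2.
  apply: Rle_trans (rsum_Rabs _) _; rewrite -rsum_card; apply: rsum_le => i.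
  exact: Tmu_abs.
have hv : Rabs v <= SA * 2.
  apply: Rle_trans (rsum_Rabs _) _; rewrite Rmult_comm -rsumZ; apply: rsum_le => i.
  rewrite Rabs_mult Rabs_right; last by apply/Rle_ge/Rlt_le/ratio_pos.
  have := Tmu_abs th1 (X2 i) s t; have := ratio_pos th1 th2 (X2 i); rewrite -/a; nra.
apply: Rle_trans (Rabs_triang _ _) _; rewrite Rabs_Ropp.
have := abs_div_le n1p hu; have := abs_div_le SAp hv; lra.
Qed.

Lemma rsum_swap (T1 T2 : finType) (f : T1 -> T2 -> R) :
  rsum (fun x => rsum (fun y => f x y)) = rsum (fun y => rsum (fun x => f x y)).
Proof. by rewrite /rsum exchange_big. Qed.

Lemma union_J (T1 T2 : finType) (P1 : T1 -> R) (P2 : T2 -> R) (E : T1 -> T2 -> Prop)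
  (G1 : T1 -> R) (G2 : T2 -> R) :
  (forall x, 0 <= P1 x) -> (forall y, 0 <= P2 y) -> rsum P1 = 1 -> rsum P2 = 1 ->
  (forall x y, 1 - G1 x - G2 y <= Defs.ind (E x y)) ->
  1 - rsum (fun x => P1 x * G1 x) - rsum (fun y => P2 y * G2 y) <=
  rsum (fun x => rsum (fun y => P1 x * P2 y * Defs.ind (E x y))).
Proof.
move=> h1 h2 s1 s2 H.
apply: Rle_trans (_ : rsum (fun x => rsum (fun y => P1 x * P2 y * (1 - G1 x - G2 y))) <= _); last first.
  apply: rsum_le => x; apply: rsum_le => y; apply: Rmult_le_compat_l; last exact: H.
  exact: Rmult_le_pos.
apply: Req_le.
set Q := rsum (fun y => P2 y * G2 y).
have e : forall x, rsum (fun y => P1 x * P2 y * (1 - G1 x - G2 y)) =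
                   (1 - Q) * P1 x - P1 x * G1 x.
  move=> x.
  rewrite (@rsum_ext _ (fun y => P1 x * P2 y * (1 - G1 x - G2 y))
                       (fun y => (P1 x * (1 - G1 x)) * P2 y - P1 x * (P2 y * G2 y))); last first.
    by move=> y; ring.
  rewrite rsumB !rsumZ s2 -/Q; ring.
rewrite (@rsum_ext _ _ _ e) rsumB rsumZ s1; ring.
Qed.

Lemma mass1 p n (th : param p) :
  rsum (fun X : sample p n => rprod (fun i => ising th (X i))) = 1.
Proof.
rewrite (prod_sum (fun _ x => ising th x)) rprod_const ising_sum1; exact: pow1.
Qed.

Lemma P_ge0 p n (th : param p) (X : sample p n) : 0 <= rprod (fun i => ising th (X i)).
Proof. apply: rprod_ge0 => i; exact: ising_ge0. Qed.

Lemma fail1 p n (th1 : param p) s t b : 0 < b / 2 <= 2 * Kc ->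
  rsum (fun X : sample p n => rprod (fun i => ising th1 (X i)) *
     Defs.ind (Rabs (rsum (fun i => suffT (X i) s t - mu th1 s t)) > INR n * (b / 2)))
  <= 2 * exp (- (INR n * (b / 2) ^ 2 / (4 * Kc))).
Proof.
move=> hb.
have Kp : 0 < Kc by have := Kc_ge1; lra.
apply: (@chernoff2 _ _ (ising th1) (fun x => suffT x s t - mu th1 s t)) => //.
- exact: ising_ge0.
- move=> l hl; exact: mgf_a.
Qed.

Lemma fail2 p n (th1 th2 : param p) s t b : smooth_density_ratio th1 th2 -> 0 < b / 4 <= 2 * Kc ->
  rsum (fun X : sample p n => rprod (fun i => ising th2 (X i)) *
     Defs.ind (Rabs (rsum (fun i => ratio th2 (psub th1 th2) (X i) * (suffT (X i) s t - mu th1 s t)))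
        > INR n * (b / 4)))
  <= 2 * exp (- (INR n * (b / 4) ^ 2 / (4 * Kc))).
Proof.
move=> hs hb.
have Kp : 0 < Kc by have := Kc_ge1; lra.
apply: (@chernoff2 _ _ (ising th2)
   (fun x => ratio th2 (psub th1 th2) x * (suffT x s t - mu th1 s t))) => //.
- exact: ising_ge0.
- move=> l hl; exact: mgf_c.
Qed.

Lemma failA p n (th1 th2 : param p) : smooth_density_ratio th1 th2 ->
  rsum (fun X : sample p n => rprod (fun i => ising th2 (X i)) *
     Defs.ind (rsum (fun i => 1 - ratio th2 (psub th1 th2) (X i)) > INR n * / 2))
  <= exp (- (INR n * (/ 2) ^ 2 / (4 * Kc))).
Proof.
move=> hs.
have K1 := Kc_ge1.
apply: (@chernoff1 _ _ (ising th2) (fun x => 1 - ratio th2 (psub th1 th2) x)).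
- exact: ising_ge0.
- lra.
- move=> l hl.
  rewrite (@rsum_ext _ _ (fun x => ising th2 x * exp ((- l) * (ratio th2 (psub th1 th2) x - 1)))).
    rewrite (_ : l ^ 2 = (- l) ^ 2); last ring.
    exact: mgf_b.
  by move=> x; congr (_ * exp _); ring.
- lra.
Qed.

Section Main.
Variables (p n1 n2 : nat) (th1 th2 : param p) (b : R).
Hypotheses (hn1 : (0 < n1)%nat) (hn2 : (0 < n2)%nat).

Definition F1 s t (X1 : sample p n1) :=
  Rabs (rsum (fun i => suffT (X1 i) s t - mu th1 s t)) > INR n1 * (b / 2).
Definition F2 s t (X2 : sample p n2) :=
  Rabs (rsum (fun i => ratio th2 (psub th1 th2) (X2 i) * (suffT (X2 i) s t - mu th1 s t)))
        > INR n2 * (b / 4).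
Definition FA (X2 : sample p n2) :=
  rsum (fun i => 1 - ratio th2 (psub th1 th2) (X2 i)) > INR n2 * / 2.

Definition G1 X1 := rsum (fun s => rsum (fun t => Defs.ind (F1 s t X1))).
Definition G2 X2 := rsum (fun s => rsum (fun t => Defs.ind (F2 s t X2))) + Defs.ind (FA X2).

Lemma G1_ge0 X1 : 0 <= G1 X1.
Proof. apply: rsum_ge0 => s; apply: rsum_ge0 => t; exact: ind_ge0. Qed.
Lemma G2_ge0 X2 : 0 <= G2 X2.
Proof.
rewrite /G2; have := ind_ge0 (FA X2).
have : 0 <= rsum (fun s => rsum (fun t => Defs.ind (F2 s t X2))).
  apply: rsum_ge0 => s; apply: rsum_ge0 => t; exact: ind_ge0.
lra.
Qed.

Lemma pointwise X1 X2 :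
  1 - G1 X1 - G2 X2 <= Defs.ind (grad_sup_le X1 X2 (psub th1 th2) b).
Proof.
have g1 := G1_ge0 X1; have g2 := G2_ge0 X2.
have i0 := ind_ge0 (grad_sup_le X1 X2 (psub th1 th2) b).
case: (classic (grad_sup_le X1 X2 (psub th1 th2) b)) => H.
  rewrite ind_T //; lra.
suff : 1 <= G1 X1 + G2 X2 by lra.
have [s [t Hst]] : exists s t, F1 s t X1 \/ F2 s t X2 \/ FA X2.
  apply: NNPP => Hn; apply: H => s t.
  apply: grad_good => //.
  - by move=> h; apply: Hn; exists s, t; left.
  - by move=> h; apply: Hn; exists s, t; right; left.
  - by move=> h; apply: Hn; exists s, t; right; right.
have le1 : forall (f : 'I_p -> 'I_p -> R), (forall s t, 0 <= f s t) ->
    f s t <= rsum (fun s => rsum (fun t => f s t)).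
  move=> f hf; apply: Rle_trans (_ : rsum (fun t => f s t) <= _).
    by apply: (@rsum_single _ (fun t => f s t) t).
  apply: (@rsum_single _ (fun s => rsum (fun t => f s t)) s) => s'.
  exact: rsum_ge0.
have hG2 : rsum (fun s => rsum (fun t => Defs.ind (F2 s t X2))) <= G2 X2.
  rewrite /G2; have := ind_ge0 (FA X2); lra.
case: Hst => [h|[h|h]].
- have := le1 (fun s t => Defs.ind (F1 s t X1)) (fun _ _ => ind_ge0 _).
  rewrite ind_T // -/(G1 X1); lra.
- have := le1 (fun s t => Defs.ind (F2 s t X2)) (fun _ _ => ind_ge0 _).
  rewrite ind_T //; lra.
- rewrite /G2 ind_T //.
  have : 0 <= rsum (fun s => rsum (fun t => Defs.ind (F2 s t X2))).
    apply: rsum_ge0 => s'; apply: rsum_ge0 => t'; exact: ind_ge0.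
  lra.
Qed.
End Main.

Lemma swap_bound (T : finType) p (P : T -> R) (f : 'I_p -> 'I_p -> T -> R) (c : R) :
  (forall x, 0 <= P x) ->
  (forall s t, rsum (fun x => P x * f s t x) <= c) ->
  rsum (fun x => P x * rsum (fun s => rsum (fun t => f s t x))) <= INR p * (INR p * c).
Proof.
move=> hP H.
rewrite (@rsum_ext _ _ (fun x => rsum (fun s => rsum (fun t => P x * f s t x)))); last first.
  move=> x; rewrite -rsumZ; apply: rsum_ext => s; by rewrite -rsumZ.
rewrite rsum_swap -!rsum_card; apply: rsum_le => s.
rewrite rsum_swap; apply: rsum_le => t; exact: H.
Qed.

Lemma sumG1 p n1 (th1 : param p) b : 0 < b / 2 <= 2 * Kc ->
  rsum (fun X1 : sample p n1 => rprod (fun i => ising th1 (X1 i)) * G1 th1 b X1)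
  <= INR p * (INR p * (2 * exp (- (INR n1 * (b / 2) ^ 2 / (4 * Kc))))).
Proof.
move=> hb; apply: swap_bound => [X|s t]; first exact: P_ge0.
exact: fail1.
Qed.

Lemma sumG2 p n2 (th1 th2 : param p) b : smooth_density_ratio th1 th2 -> 0 < b / 4 <= 2 * Kc ->
  rsum (fun X2 : sample p n2 => rprod (fun i => ising th2 (X2 i)) * G2 th1 th2 b X2)
  <= INR p * (INR p * (2 * exp (- (INR n2 * (b / 4) ^ 2 / (4 * Kc)))))
     + exp (- (INR n2 * (/ 2) ^ 2 / (4 * Kc))).
Proof.
move=> hs hb; rewrite /G2.
rewrite (@rsum_ext _ _ (fun X2 : sample p n2 =>
   rprod (fun i => ising th2 (X2 i)) * rsum (fun s => rsum (fun t => Defs.ind (F2 th1 th2 b s t X2)))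
   + rprod (fun i => ising th2 (X2 i)) * Defs.ind (FA th1 th2 X2))); last by move=> X; ring.
rewrite rsumD; apply: Rplus_le_compat.
  apply: swap_bound => [X|s t]; first exact: P_ge0.
  exact: fail2.
exact: failA.
Qed.

Lemma le_div_helper a c d : 0 < d -> a * d <= c -> a <= c / d.
Proof.
move=> hd h; apply: (Rmult_le_reg_r d) => //; rewrite /Rdiv Rmult_assoc Rinv_l; lra.
Qed.

Lemma expo3 x e : 1 <= x -> 3 * ln x <= e -> x * (x * (2 * exp (- e))) <= 2 / x.
Proof.
move=> hx he.
have xp : 0 < x by lra.
have h : exp (- e) <= / (x * x * x).
  apply: Rle_trans (_ : exp (- (3 * ln x)) <= _); first by apply: exp_le; lra.
  rewrite exp_Ropp (_ : 3 * ln x = ln x + ln x + ln x); last ring.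
  by rewrite !exp_plus exp_ln //; lra.
have h' := Rmult_le_compat_l (x * x * 2) _ _ (ltac:(nra) : 0 <= x * x * 2) h.
apply: Rle_trans (_ : x * x * 2 * / (x * x * x) <= _); first lra.
apply: Req_le; field; lra.
Qed.

Lemma expo1 x e : 1 <= x -> ln x <= e -> exp (- e) <= 1 / x.
Proof.
move=> hx he.
apply: Rle_trans (_ : exp (- ln x) <= _); first by apply: exp_le; lra.
rewrite exp_Ropp exp_ln; lra.
Qed.

Theorem corollary1 :
  exists eta2 c : R, 0 < eta2 /\ 0 < c /\
  forall (p n1 n2 : nat) (th1 th2 : param p) (eta0 : R),
    (1 <= p)%nat -> (1 <= n1)%nat -> (1 <= n2)%nat ->
    smooth_density_ratio th1 th2 ->
    eigen_bound n1 n2 th1 th2 eta0 ->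
    1 - c / INR p <=
      @prob p n1 n2 th1 th2 (fun X1 X2 =>
        grad_sup_le X1 X2 (psub th1 th2)
          (eta2 * sqrt (ln (INR p)) / sqrt (INR (minn n1 n2)))).
Proof.
have K1 := Kc_ge1.
exists (16 * Kc), 5; split; first lra; split; first lra.
move=> p n1 n2 th1 th2 eta0 hp hn1 hn2 hs _.
set m := minn n1 n2.
set L := ln (INR p).
set b := 16 * Kc * sqrt L / sqrt (INR m).
have pR : 1 <= INR p by rewrite -/(INR 1); apply: le_INR; apply/leP.
have n1R : 1 <= INR n1 by rewrite -/(INR 1); apply: le_INR; apply/leP.
have n2R : 1 <= INR n2 by rewrite -/(INR 1); apply: le_INR; apply/leP.
have mR : 1 <= INR m by rewrite -/(INR 1); apply: le_INR; apply/leP; rewrite leq_min hn1 hn2.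
have mn1 : INR m <= INR n1 by apply: le_INR; apply/leP; exact: geq_minl.
have mn2 : INR m <= INR n2 by apply: le_INR; apply/leP; exact: geq_minr.
have prob0 : 0 <= @prob p n1 n2 th1 th2 (fun X1 X2 => grad_sup_le X1 X2 (psub th1 th2) b).
  rewrite /prob; apply: rsum_ge0 => X1; apply: rsum_ge0 => X2; apply: Rmult_le_pos; last exact: ind_ge0.
  apply: Rmult_le_pos; exact: P_ge0.
case: (Rle_or_lt (INR p) 1) => hp1.
  have -> : INR p = 1 by lra.
  lra.
have Lp : 0 < L by rewrite /L -ln_1; apply: ln_increasing; lra.
have smp : 0 < sqrt (INR m) by apply: sqrt_lt_R0; lra.
have e1 : b * sqrt (INR m) = 16 * Kc * sqrt L by rewrite /b; field; lra.
have hb2 : b ^ 2 * INR m = (16 * Kc) ^ 2 * L.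
  rewrite -{1}(sqrt_sqrt (INR m)); last lra.
  rewrite -{1}(sqrt_sqrt L); last lra.
  transitivity ((b * sqrt (INR m)) ^ 2); first ring.
  rewrite e1; ring.
have bpos : 0 < b.
  rewrite /b; apply: Rdiv_lt_0_compat => //; apply: Rmult_lt_0_compat; first lra.
  exact: sqrt_lt_R0.
have n1p : (0 < n1)%nat by [].
have n2p : (0 < n2)%nat by [].
have p5 : 0 < 5 / INR p by apply: Rdiv_lt_0_compat; lra.
case: (Rle_or_lt 4 b) => hb4.
  apply: Rle_trans (_ : 1 - rsum (fun X : sample p n1 => rprod (fun i => ising th1 (X i)) * 0)
                          - rsum (fun X : sample p n2 => rprod (fun i => ising th2 (X i)) * 0) <= _).
    rewrite !(@rsum_ext _ (fun X => rprod _ * 0) (fun _ => 0 * 0)); try by move=> X; ring.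
    rewrite !rsumZ; lra.
  apply: union_J => //.
  - exact: P_ge0.
  - exact: P_ge0.
  - exact: mass1.
  - exact: mass1.
  - move=> X1 X2; rewrite ind_T; first lra.
    move=> s t; exact: grad_always.
apply: Rle_trans (_ : 1 - rsum (fun X : sample p n1 => rprod (fun i => ising th1 (X i)) * G1 th1 b X)
                        - rsum (fun X : sample p n2 => rprod (fun i => ising th2 (X i)) * G2 th1 th2 b X) <= _);
  last first.
  apply: union_J => //.
  - exact: P_ge0.
  - exact: P_ge0.
  - exact: mass1.
  - exact: mass1.
  - move=> X1 X2; exact: pointwise.
have s1 := @sumG1 p n1 th1 b ltac:(lra).
have s2 := @sumG2 p n2 th1 th2 b hs ltac:(lra).
have E1 : 3 * L <= INR n1 * (b / 2) ^ 2 / (4 * Kc).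
  rewrite (_ : INR n1 * (b / 2) ^ 2 / (4 * Kc) = INR n1 * b ^ 2 / (16 * Kc)); last by field; lra.
  apply: le_div_helper; first lra.
  have : INR m * b ^ 2 <= INR n1 * b ^ 2 by nra.
  have : 0 <= Kc * L * (256 * Kc - 48) by apply: Rmult_le_pos; nra.
  nra.
have E2 : 3 * L <= INR n2 * (b / 4) ^ 2 / (4 * Kc).
  rewrite (_ : INR n2 * (b / 4) ^ 2 / (4 * Kc) = INR n2 * b ^ 2 / (64 * Kc)); last by field; lra.
  apply: le_div_helper; first lra.
  have : INR m * b ^ 2 <= INR n2 * b ^ 2 by nra.
  have : 0 <= Kc * L * (256 * Kc - 192) by apply: Rmult_le_pos; nra.
  nra.
have EA : L <= INR n2 * (/ 2) ^ 2 / (4 * Kc).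
  rewrite (_ : INR n2 * (/ 2) ^ 2 / (4 * Kc) = INR n2 / (16 * Kc)); last by field; lra.
  apply: le_div_helper; first lra.
  have hb16 : b ^ 2 < 16 by nra.
  have hK : 0 <= Kc * L * (Kc - 1) by apply: Rmult_le_pos; nra.
  have hm16 : b ^ 2 * INR m < 16 * INR m by apply: Rmult_lt_compat_r; lra.
  nra.
have := expo3 pR E1; have := expo3 pR E2; have := expo1 pR EA.
rewrite -/L.
have -> : 5 / INR p = 2 / INR p + 2 / INR p + 1 / INR p by field; lra.
lra.
Qed.
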